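(* Let $\mathbb{F}\in\{\mathbb{R},\mathbb{C}\}$, let $\nu$ be a vector norm on $\mathbb{F}^n$, and let $A\in\mathbb{F}^{n\times n}$ be paracontracting with respect to $\nu$. Let $K=\{x\in\mathbb{F}^n: Ax=x\}$ be the subspace of fixed points of $A$ and let $H=\mathcal{R}(I-A)$ be the range of $I-A$. Then $H$ is invariant under $A$, $H$ is complementary to $K$ (i.e. $\mathbb{F}^n=H\oplus K$), and $\nu^0_H(A)<1$; consequently $A$ is an $H$-contractor with respect to $\nu$.
   Context: $A$ is paracontracting with respect to $\nu$ if $\nu(Ax)<\nu(x)$ whenever $Ax\neq x$. For a subspace $H$ invariant under $A$, the partial norm is $\nu^0_H(A)=\sup_{0\neq x\in H}\nu(Ax)/\nu(x)$. The operator norm is $\nu^0(A)=\sup_{x\neq 0}\nu(Ax)/\nu(x)$. $A$ is nonexpansive with respect to $\nu$ if $\nu^0(A)\le 1$. $A$ is an $H$-contractor (with respect to $\nu$) if $A$ is nonexpansive, $H$ is invariant under $A$, and $\nu^0_H(A)<1$. *)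

(* Defs.v *)
From HB Require Import structures.
From mathcomp Require Import all_boot all_order all_algebra.
From mathcomp Require Import classical_sets reals.
From mathcomp Require Export complex.
Set Implicit Arguments. Unset Strict Implicit. Unset Printing Implicit Defensive.
Import Order.TTheory GRing.Theory Num.Theory.
Local Open Scope ring_scope.
Local Open Scope classical_set_scope.

Section NormDefs.
Variables (R : realType) (F : numFieldType) (absF : F -> R) (n : nat).

Definition is_vnorm (nu : 'cV[F]_n -> R) : Prop :=
  [/\ forall x, 0 <= nu x,
      forall x, nu x = 0 -> x = 0,
      forall (a : F) x, nu (a *: x) = absF a * nu x
    & forall x y, nu (x + y) <= nu x + nu y].

Definition paracontracting (nu : 'cV[F]_n -> R) (A : 'M[F]_n) : Prop :=
  forall x, A *m x != x -> nu (A *m x) < nu x.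

Definition fixed_space (A : 'M[F]_n) : set 'cV[F]_n := [set x | A *m x = x].

Definition mx_range (M : 'M[F]_n) : set 'cV[F]_n :=
  [set M *m y | y in [set: 'cV[F]_n]].

Definition mx_invariant (A : 'M[F]_n) (H : set 'cV[F]_n) : Prop :=
  forall x, H x -> H (A *m x).

Definition complementary (H K : set 'cV[F]_n) : Prop :=
  (forall x, exists h k, [/\ H h, K k & x = h + k]) /\
  (forall x, H x -> K x -> x = 0).

(* Partial norm nu^0_H(A) = sup_{0 <> x in H} nu(Ax)/nu(x)
   (MathComp-Analysis sup; the sup of the empty set is 0). *)
Definition partial_norm (nu : 'cV[F]_n -> R) (A : 'M[F]_n) (H : set 'cV[F]_n) : R :=
  sup [set nu (A *m x) / nu x | x in [set x | H x /\ x != 0]].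

Definition op_norm (nu : 'cV[F]_n -> R) (A : 'M[F]_n) : R :=
  sup [set nu (A *m x) / nu x | x in [set x | x != 0]].

Definition nonexpansive (nu : 'cV[F]_n -> R) (A : 'M[F]_n) : Prop :=
  op_norm nu A <= 1.

Definition contractor (nu : 'cV[F]_n -> R) (A : 'M[F]_n) (H : set 'cV[F]_n) : Prop :=
  [/\ nonexpansive nu A, mx_invariant A H & partial_norm nu A H < 1].

End NormDefs.

(* Main.v *)
Require Import Defs.
From HB Require Import structures.
From mathcomp Require Import all_boot all_order all_algebra.
From mathcomp Require Import classical_sets reals complex.
From mathcomp Require Import boolp topology normedtype derive.
From mathcomp Require Import lra.
Import Order.TTheory GRing.Theory Num.Theory.
Import numFieldNormedType.Exports.
Local Open Scope ring_scope.
Local Open Scope classical_set_scope.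

Section Core.
Variables (R : realType) (m : nat).
Implicit Types (p q : 'rV[R]_m -> R).

Definition subadd p := forall x y, p (x + y) <= p x + p y.
Definition homog p := forall (a : R) x, p (a *: x) = `|a| * p x.

Lemma hom0 p : homog p -> p 0 = 0.
Proof. by move=> pZ; have := pZ 0 0; rewrite scale0r normr0 mul0r. Qed.

Lemma homge0 p : subadd p -> homog p -> forall x, 0 <= p x.
Proof.
move=> pD pZ x.
have : p (x + (-1) *: x) <= p x + p ((-1) *: x) by apply: pD.
rewrite [p ((-1) *: x)]pZ scaleN1r subrr hom0 // normrN normr1 mul1r => h.
by rewrite -(pmulrn_lge0 _ (isT : (0 < 2)%N)) mulr2n.
Qed.

Lemma coord_le (x : 'rV[R]_m) j : `|x 0 j| <= `|x|.
Proof.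
rewrite [leRHS]/Num.Def.normr /= mx_normrE; apply/bigmax_geP; right => /=.
by exists (0, j).
Qed.

Lemma seminorm_bound p : subadd p -> homog p ->
  forall x, p x <= (\sum_j p 'e_j) * `|x|.
Proof.
move=> pD pZ x.
rewrite {1}(row_sum_delta x) mulr_suml.
apply: (big_ind2 (fun a b => p a <= b)) => [|a1 a2 b1 b2 h1 h2|j _].
- by rewrite hom0.
- exact: le_trans (pD _ _) (lerD h1 h2).
- rewrite pZ mulrC; apply: ler_wpM2l; [exact: homge0 | exact: coord_le].
Qed.

Lemma seminorm_cont p : subadd p -> homog p -> continuous p.
Proof.
move=> pD pZ.
set C := \sum_j p 'e_j + 1.
have C0 : 0 < C by rewrite ltr_wpDl ?sumr_ge0 // => j _; exact: homge0.
have lip x y : `|p x - p y| <= C * `|x - y|.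
  have h1 : p x <= p y + p (x - y) by rewrite -{1}(subrK y x) addrC pD.
  have h2 : p y <= p x + p (x - y).
    have := pD x (y - x); rewrite addrC subrK -opprB -scaleN1r pZ normrN normr1 mul1r.
    by [].
  apply: (@le_trans _ _ (p (x - y))).
    by rewrite ler_norml; apply/andP; split; lra.
  apply: (le_trans (seminorm_bound p pD pZ (x - y))).
  by rewrite ler_wpM2r // lerDl.
move=> x; apply/(@cvgrPdist_le _ _ _ _ (nbhs_filter x)) => e e0; near=> t.
apply: le_trans (lip _ _) _.
rewrite -ler_pdivlMl // mulrC.
near: t.
apply: (@cvgr_dist_le _ _ _ _ _ (fun t => t)); first exact: cvg_id.
exact: divr_gt0.
Unshelve. all: by end_near.
Qed.

Lemma core p q : subadd p -> homog p -> subadd q -> homog q ->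
  (forall x, x != 0 -> 0 < q x) -> (forall x, x != 0 -> p x < q x) ->
  exists2 c, c < 1 & forall x, x != 0 -> p x <= c * q x.
Proof.
move=> pD pZ qD qZ qpos pq.
have [[x0 x00]|none] := pselect (exists x : 'rV[R]_m, x != 0); last first.
  exists 0 => // x x0; exfalso; apply: none; by exists x.
pose S := [set x : 'rV[R]_m | `|x| = 1].
have nx0 (x : 'rV[R]_m) : x != 0 -> `| `|x|^-1 *: x | = 1.
  by move=> xn0; rewrite normrZ normrV ?unitfE ?normr_eq0 // ?normr_id mulVf // normr_eq0.
have S0 : S !=set0.
  by exists (`|x0|^-1 *: x0); apply: nx0.
have Sc : compact S.
  apply: bounded_closed_compact.
    exists 1; split; first exact: num_real.
    by move=> M M1 x /= ->; exact: ltW.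
  apply: (@preimage_closed _ _ (fun x : 'rV[R]_m => `|x|) [set y | y = 1]).
    by move=> ? _; exact: norm_continuous.
  exact: closed_eq.
have Sn0 x : S x -> x != 0.
  by move=> /= Sx; rewrite -normr_eq0 Sx oner_neq0.
have pc := seminorm_cont p pD pZ; have qc := seminorm_cont q qD qZ.
pose f x := p x * (q x)^-1.
have fc : {within S, continuous f}.
  apply: continuous_in_subspaceT => x; rewrite inE => Sx.
  apply: (@continuousM _ _ p (fun y => (q y)^-1) x (pc x)).
  apply: (@continuousV _ _ q x); last exact: qc.
  by rewrite gt_eqF // qpos // Sn0.
have [c0 Sc0 c0max] := EVT_max_rV S0 Sc fc.
rewrite inE in Sc0.
exists (f c0).
  by rewrite /f -/(p c0 / q c0) ltr_pdivrMr ?mul1r ?qpos ?pq ?Sn0.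
move=> x xn0.
have ax : 0 < `|x|^-1 by rewrite invr_gt0 normr_gt0.
have := c0max (`|x|^-1 *: x); rewrite inE => /(_ (nx0 _ xn0)).
rewrite /f pZ qZ gtr0_norm // invfM mulrACA mulfV ?gt_eqF // mul1r.
by rewrite -/(p x / q x) ler_pdivrMr ?qpos.
Qed.
End Core.

Section Generic.
Variables (R : realType) (F : numFieldType) (absF : F -> R).
Hypothesis habs1 : absF (-1) = 1.
Hypothesis habsn : forall k : nat, absF k%:R = k%:R.
Hypothesis hcore : forall r (p q : 'cV[F]_r -> R),
  (forall x y, p (x + y) <= p x + p y) -> (forall a x, p (a *: x) = absF a * p x) ->
  (forall x y, q (x + y) <= q x + q y) -> (forall a x, q (a *: x) = absF a * q x) ->
  (forall x, x != 0 -> 0 < q x) -> (forall x, x != 0 -> p x < q x) ->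
  exists2 c, c < 1 & forall x, x != 0 -> p x <= c * q x.
Variables (n : nat) (nu : 'cV[F]_n -> R) (A : 'M[F]_n).
Hypothesis hnu : is_vnorm absF nu.
Hypothesis hpc : paracontracting nu A.

Let H := mx_range (1%:M - A).
Let K := fixed_space A.

Lemma nu_ge0 x : 0 <= nu x. Proof. by case: hnu. Qed.
Lemma nu_eq0 x : nu x = 0 -> x = 0. Proof. by case: hnu => _ h _ _; apply: h. Qed.
Lemma nuZ a x : nu (a *: x) = absF a * nu x. Proof. by case: hnu. Qed.
Lemma nuD x y : nu (x + y) <= nu x + nu y. Proof. by case: hnu. Qed.
Lemma nuN x : nu (- x) = nu x. Proof. by rewrite -scaleN1r nuZ habs1 mul1r. Qed.
Lemma nu_gt0 x : x != 0 -> 0 < nu x.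
Proof.
move=> xn0; rewrite lt_def nu_ge0 andbT; apply/eqP => /nu_eq0 x0.
by rewrite x0 eqxx in xn0.
Qed.

Lemma nonexp x : nu (A *m x) <= nu x.
Proof.
have [->|ne] := eqVneq (A *m x) x; first by [].
exact/ltW/hpc.
Qed.

Lemma rangeE x : H x <-> exists y, x = (1%:M - A) *m y.
Proof.
split; first by case=> y _ <-; exists y.
by case=> y ->; exists y.
Qed.

Lemma inter x : H x -> K x -> x = 0.
Proof.
move=> /rangeE [y xE] Kx; rewrite /K /fixed_space /= in Kx.
have Ay : A *m y = y - x by rewrite xE mulmxBl mul1mx opprB addrC subrK.
have step k : nu (y - x *+ k) <= nu y.
  elim: k => [|k IH]; first by rewrite mulr0n subr0.
  have -> : y - x *+ k.+1 = A *m (y - x *+ k).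
    by rewrite mulmxBr -[x *+ k]scaler_nat -scalemxAr Kx scaler_nat Ay mulrSr opprD addrA addrAC.
  exact: le_trans (nonexp _) IH.
have bnd k : k%:R * nu x <= 2 * nu y.
  have -> : k%:R * nu x = nu (x *+ k) by rewrite -[x *+ k]scaler_nat nuZ habsn.
  have -> : x *+ k = y + - (y - x *+ k) by rewrite opprB addrC subrK.
  apply: le_trans (nuD _ _) _; rewrite nuN.
  by have := step k; lra.
apply: nu_eq0; apply/eqP; rewrite eq_le nu_ge0 andbT; apply/negP => /negP.
rewrite -ltNge => nx0.
have := @archi_boundP R (2 * nu y / nu x).
rewrite divr_ge0 ?mulr_ge0 ?nu_ge0 // => /(_ isT).
rewrite ltr_pdivrMr // => h.
have := bnd (Num.Def.archi_bound (2 * nu y / nu x)); lra.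
Qed.

Lemma invar : mx_invariant A H.
Proof.
move=> x /rangeE [y ->]; apply/rangeE; exists (A *m y).
by rewrite !mulmxA mulmxBl mulmxBr mul1mx mulmx1.
Qed.


Let B := (1%:M - A)^T.

Lemma rangeB x : H x <-> (x^T <= B)%MS.
Proof.
rewrite rangeE; split.
  by case=> y ->; rewrite trmx_mul submxMl.
case/submxP=> D xE; exists D^T.
by rewrite -[x]trmxK xE trmx_mul trmxK.
Qed.

Lemma kerB x : K x <-> (x^T <= kermx B)%MS.
Proof.
rewrite /K /fixed_space /=; split.
  move=> Ax; apply/sub_kermxP.
  by rewrite -trmx_mul mulmxBl mul1mx Ax subrr trmx0.
move/sub_kermxP; rewrite -trmx_mul => /eqP; rewrite trmx_eq0 mulmxBl mul1mx subr_eq0.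
by move/eqP.
Qed.

Lemma compl : complementary H K.
Proof.
split; last exact: inter.
move=> x.
have cap0 : (B :&: kermx B)%MS = 0.
  apply/eqP; rewrite -submx0; apply/rV_subP => v; rewrite sub_capmx => /andP[v1 v2].
  rewrite submx0 -trmx_eq0; apply/eqP; apply: inter.
    by apply/rangeB; rewrite trmxK.
  by apply/kerB; rewrite trmxK.
have full : row_full (B + kermx B)%MS.
  rewrite /row_full mxrank_disjoint_sum // mxrank_ker.
  by rewrite subnKC // rank_leq_row.
have := submx_full x^T full; case/sub_addsmxP => [[u1 u2]] /= xE.
exists (u1 *m B)^T, (u2 *m kermx B)^T; split.
- by apply/rangeB; rewrite trmxK submxMl.
- by apply/kerB; rewrite trmxK submxMl.
- by rewrite -linearD /= -xE trmxK.
Qed.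


Let M := (row_base B)^T.

Lemma rangeM x : H x <-> exists z, x = M *m z.
Proof.
rewrite rangeB /M; split.
  rewrite -(eq_row_base B); case/submxP => D xE; exists D^T.
  by rewrite -[x]trmxK xE trmx_mul ?trmxK.
case=> z ->; rewrite trmx_mul trmxK -(eq_row_base B); exact: submxMl.
Qed.

Lemma M_inj (z : 'cV[F]_(\rank B)) : M *m z = 0 -> z = 0.
Proof.
move=> h0.
have h : z^T *m row_base B = 0.
  by apply/eqP; rewrite -trmx_eq0 trmx_mul trmxK -/M h0.
have : z^T *m row_base B = 0 *m row_base B by rewrite h mul0mx.
move/(row_free_inj (row_base_free B)) => /eqP; rewrite trmx_eq0.
by move/eqP.
Qed.

Lemma pnorm_lt1 : partial_norm nu A H < 1.
Proof.
pose p z := nu (A *m (M *m z)); pose q z := nu (M *m z).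
have [||||||c c1 hc] := @hcore _ p q.
- by move=> x y; rewrite /p mulmxDr mulmxDr nuD.
- by move=> a x; rewrite /p -scalemxAr -scalemxAr nuZ.
- by move=> x y; rewrite /q mulmxDr nuD.
- by move=> a x; rewrite /q -scalemxAr nuZ.
- move=> z zn0; apply: nu_gt0; apply/eqP => /M_inj z0.
  by rewrite z0 eqxx in zn0.
- move=> z zn0; have Mz0 : M *m z != 0.
    by apply/eqP => /M_inj z0; rewrite z0 eqxx in zn0.
  apply: hpc; apply/eqP => Ax.
  have : M *m z = 0 by apply: inter; [apply/rangeM; exists z | exact: Ax].
  by move/eqP; rewrite (negbTE Mz0).
rewrite /partial_norm.
set S := [set _ | _ in _].
have [[y Sy]|S0] := pselect (S !=set0); last first.
  have -> : S = set0.
    by apply/seteqP; split => // y Sy; exfalso; apply: S0; exists y.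
  by rewrite sup0 ltr01.
apply: le_lt_trans c1.
apply: ge_sup; first by exists y.
move=> _ [x [/rangeM [z xE] xn0] <-].
have zn0 : z != 0 by apply/eqP => z0; rewrite xE z0 mulmx0 eqxx in xn0.
rewrite ler_pdivrMr ?nu_gt0 // xE.
exact: hc.
Qed.

Lemma opnorm_le1 : op_norm nu A <= 1.
Proof.
rewrite /op_norm; set S := [set _ | _ in _].
have [[y Sy]|S0] := pselect (S !=set0); last first.
  have -> : S = set0.
    by apply/seteqP; split => // y Sy; exfalso; apply: S0; exists y.
  by rewrite sup0 ler01.
apply: ge_sup; first by exists y.
move=> _ [x xn0 <-].
by rewrite ler_pdivrMr ?nu_gt0 // mul1r nonexp.
Qed.

Lemma main_generic :
  [/\ mx_invariant A H, complementary H K, partial_norm nu A H < 1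
    & contractor nu A H].
Proof.
split; [exact: invar | exact: compl | exact: pnorm_lt1 |].
split; [exact: opnorm_le1 | exact: invar | exact: pnorm_lt1].
Qed.

End Generic.


Lemma core_real (R : realType) r (p q : 'cV[R]_r -> R) :
  (forall x y, p (x + y) <= p x + p y) -> (forall a x, p (a *: x) = `|a| * p x) ->
  (forall x y, q (x + y) <= q x + q y) -> (forall a x, q (a *: x) = `|a| * q x) ->
  (forall x, x != 0 -> 0 < q x) -> (forall x, x != 0 -> p x < q x) ->
  exists2 c, c < 1 & forall x, x != 0 -> p x <= c * q x.
Proof.
move=> pD pZ qD qZ qp pq.
have [||||||c c1 hc] := @core R r (fun w => p w^T) (fun w => q w^T).
- by move=> x y /=; rewrite linearD /=.
- by move=> a x /=; rewrite linearZ /= pZ.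
- by move=> x y /=; rewrite linearD /=.
- by move=> a x /=; rewrite linearZ /= qZ.
- by move=> x xn0; apply: qp; rewrite trmx_eq0.
- by move=> x xn0; apply: pq; rewrite trmx_eq0.
exists c => // x xn0; rewrite -[x]trmxK; apply: hc; by rewrite trmx_eq0.
Qed.

Section Cplx.
Variable R : realType.
Variable r : nat.

Definition emb (w : 'rV[R]_(r + r)) : 'cV[R[i]]_r :=
  \col_(k < r) Complex (w 0 (lshift r k)) (w 0 (rshift r k)).

Definition unemb (z : 'cV[R[i]]_r) : 'rV[R]_(r + r) :=
  row_mx (\row_k complex.Re (z k 0)) (\row_k complex.Im (z k 0)).

Lemma embD w1 w2 : emb (w1 + w2) = emb w1 + emb w2.
Proof. by apply/matrixP => i j; rewrite !mxE. Qed.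

Lemma embZ (a : R) w : emb (a *: w) = a%:C%C *: emb w.
Proof.
apply/matrixP => i j; rewrite !mxE /=.
by apply/eqP; rewrite eq_complex /= !mul0r subr0 addr0 !eqxx.
Qed.

Lemma unembK z : emb (unemb z) = z.
Proof.
apply/matrixP => i j; rewrite mxE /unemb row_mxEl row_mxEr !mxE.
by rewrite (ord1 j); case: (z i 0).
Qed.

Lemma emb_eq0 w : emb w = 0 -> w = 0.
Proof.
move=> h; apply/rowP => j; rewrite mxE.
have hk k : w 0 (lshift r k) = 0 /\ w 0 (rshift r k) = 0.
  have := congr1 (fun M : 'cV[R[i]]_r => M k 0) h; rewrite !mxE => /eqP.
  by rewrite eq_complex /= => /andP[/eqP -> /eqP ->].
case: (splitP j) => k jk.
  have -> : j = lshift r k by apply: val_inj.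
  by case: (hk k).
have -> : j = rshift r k by apply: val_inj.
by case: (hk k).
Qed.

Lemma ReNormC (a : R) : complex.Re `|a%:C%C| = `|a|.
Proof.
rewrite normc_def /= expr0n /= addr0 sqrtr_sqr //.
Qed.

End Cplx.
Arguments emb {R r} w.
Arguments unemb {R r} z.
Arguments emb_eq0 {R r w}.
Arguments unembK {R r} z.
Arguments embD {R r}.
Arguments embZ {R r}.

Lemma core_cplx (R : realType) r (p q : 'cV[R[i]]_r -> R) :
  (forall x y, p (x + y) <= p x + p y) -> (forall a x, p (a *: x) = complex.Re `|a| * p x) ->
  (forall x y, q (x + y) <= q x + q y) -> (forall a x, q (a *: x) = complex.Re `|a| * q x) ->
  (forall x, x != 0 -> 0 < q x) -> (forall x, x != 0 -> p x < q x) ->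
  exists2 c, c < 1 & forall x, x != 0 -> p x <= c * q x.
Proof.
move=> pD pZ qD qZ qp pq.
have en0 (w : 'rV[R]_(r + r)) : w != 0 -> emb w != 0.
  by move=> wn0; apply/eqP => /emb_eq0 w0; rewrite w0 eqxx in wn0.
have [||||||c c1 hc] := @core R (r + r) (fun w => p (emb w)) (fun w => q (emb w)).
- by move=> x y /=; rewrite embD.
- by move=> a x /=; rewrite embZ pZ ReNormC.
- by move=> x y /=; rewrite embD.
- by move=> a x /=; rewrite embZ qZ ReNormC.
- by move=> x xn0; apply: qp; apply: en0.
- by move=> x xn0; apply: pq; apply: en0.
exists c => // x xn0; rewrite -(unembK x); apply: hc.
apply/eqP => u0; move: xn0; rewrite -(unembK x) u0.
have -> : emb (0 : 'rV[R]_(r + r)) = 0.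
  by apply/matrixP => i j; rewrite !mxE.
by rewrite eqxx.
Qed.

Lemma ReNat (R : realType) (k : nat) : complex.Re (k%:R : R[i]) = k%:R.
Proof.
have ReD (a b : R[i]) : complex.Re (a + b) = complex.Re a + complex.Re b.
  by case: a; case: b.
elim: k => [//|k IH]; rewrite -addn1 natrD [RHS]natrD ReD IH //.
Qed.

(* F = R (modulus `|a|) and F = C = R[i] (modulus Re `|a|, i.e. the complex modulus). *)
Theorem lemma2p5 (R : realType) :
  (forall (n : nat) (nu : 'cV[R]_n -> R) (A : 'M[R]_n),
     is_vnorm (fun a : R => `|a|) nu ->
     paracontracting nu A ->
     [/\ mx_invariant A (mx_range (1%:M - A)),
         complementary (mx_range (1%:M - A)) (fixed_space A),
         partial_norm nu A (mx_range (1%:M - A)) < 1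
       & contractor nu A (mx_range (1%:M - A))]) /\
  (forall (n : nat) (nu : 'cV[R[i]]_n -> R) (A : 'M[R[i]]_n),
     is_vnorm (fun a : R[i] => complex.Re `|a|) nu ->
     paracontracting nu A ->
     [/\ mx_invariant A (mx_range (1%:M - A)),
         complementary (mx_range (1%:M - A)) (fixed_space A),
         partial_norm nu A (mx_range (1%:M - A)) < 1
       & contractor nu A (mx_range (1%:M - A))]).
Proof.
split=> n nu A hnu hpc.
- apply: (@main_generic R R (fun a : R => `|a|)) => //.
  + by rewrite normrN1.
  + by move=> k; rewrite normr_nat.
  + move=> r p q; exact: core_real.
- apply: (@main_generic R R[i] (fun a : R[i] => complex.Re `|a|)) => //.
  + by rewrite normrN1.
  + by move=> k; rewrite normr_nat ReNat.
  + move=> r p q; exact: core_cplx.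
Qed.
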